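(* Let $\lambda\neq0$ and $U=\{x\in\mathbb R^4:x^2>|x^4|\}$. Write $x^2=\rho\,\mathrm{ch}(\lambda\varphi)$, $x^4=\rho\,\mathrm{sh}(\lambda\varphi)$ with $\rho>0$, $\varphi\in\mathbb R$ (i.e. $\rho=\sqrt{(x^2)^2-(x^4)^2}$, $\lambda\varphi=\operatorname{artanh}(x^4/x^2)$). Then a smooth covector field $A$ on $U$ satisfies $L_\xi A=0$ for $\xi\in\{e_{13}+\lambda e_{24},\,e_1,\,e_3\}$ if and only if there are smooth functions $C_1,\dots,C_4$ of $\rho\in(0,\infty)$ such that $$A_1=C_1(\rho)\cos\varphi+C_2(\rho)\sin\varphi,\quad A_2=C_3(\rho)\,\mathrm{ch}\,\lambda\varphi+C_4(\rho)\,\mathrm{sh}\,\lambda\varphi,$$ $$A_3=-C_1(\rho)\sin\varphi+C_2(\rho)\cos\varphi,\quad A_4=-C_3(\rho)\,\mathrm{sh}\,\lambda\varphi-C_4(\rho)\,\mathrm{ch}\,\lambda\varphi .$$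
   Context: Work in $\mathbb R^4$ with Galilean (Cartesian) coordinates $x^1,x^2,x^3,x^4$ of Minkowski space (metric $\mathrm{diag}(-1,-1,-1,1)$). A potential on an open set $U\subseteq\mathbb R^4$ is a smooth covector field $A=A_i\,dx^i$; its components $A_i$ are always those with respect to the coordinates $x^i$, even when written as functions of other variables. For a vector field $\xi=\xi^k\partial_k$ the Lie derivative is $(L_\xi A)_i=\xi^k\partial_kA_i+A_k\partial_i\xi^k$. The vector fields used are, by components $(\xi^1,\xi^2,\xi^3,\xi^4)$: $e_1=(1,0,0,0)$, $e_2=(0,1,0,0)$, $e_3=(0,0,1,0)$, $e_4=(0,0,0,1)$, $e_{12}=(-x^2,x^1,0,0)$, $e_{13}=(x^3,0,-x^1,0)$, $e_{23}=(0,-x^3,x^2,0)$, $e_{14}=(x^4,0,0,x^1)$, $e_{24}=(0,x^4,0,x^2)$, $e_{34}=(0,0,x^4,x^3)$. A potential admits a family of vector fields if $L_\xi A=0$ for each $\xi$ in it (equivalently for every element of their linear span). ''Functions'' are smooth real functions; $\mathrm{ch}=\cosh$, $\mathrm{sh}=\sinh$. *)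

(* Defs.v *)
From Stdlib Require Import Reals.
From Coquelicot Require Import Coquelicot.
Open Scope R_scope.

Record pt := Pt { x1 : R; x2 : R; x3 : R; x4 : R }.

Definition coord (k : nat) (p : pt) : R :=
  match k with 1%nat => x1 p | 2%nat => x2 p | 3%nat => x3 p | 4%nat => x4 p | _ => 0 end.

Definition shift (k : nat) (t : R) (p : pt) : pt :=
  match k with
  | 1%nat => Pt (x1 p + t) (x2 p) (x3 p) (x4 p)
  | 2%nat => Pt (x1 p) (x2 p + t) (x3 p) (x4 p)
  | 3%nat => Pt (x1 p) (x2 p) (x3 p + t) (x4 p)
  | 4%nat => Pt (x1 p) (x2 p) (x3 p) (x4 p + t)
  | _ => p
  end.

Definition partial (k : nat) (f : pt -> R) (p : pt) : R :=
  Derive (fun t => f (shift k t p)) 0.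

Definition has_partial (k : nat) (f : pt -> R) (p : pt) : Prop :=
  ex_derive (fun t => f (shift k t p)) 0.

Definition continuous_at_pt (f : pt -> R) (p : pt) : Prop :=
  forall eps, 0 < eps -> exists delta, 0 < delta /\
    forall q, Rabs (x1 q - x1 p) < delta -> Rabs (x2 q - x2 p) < delta ->
              Rabs (x3 q - x3 p) < delta -> Rabs (x4 q - x4 p) < delta ->
              Rabs (f q - f p) < eps.

Fixpoint Cn_on (n : nat) (U : pt -> Prop) (f : pt -> R) : Prop :=
  match n with
  | O => forall p, U p -> continuous_at_pt f p
  | S m => (forall p, U p -> continuous_at_pt f p) /\
           forall k, (1 <= k <= 4)%nat ->
             (forall p, U p -> has_partial k f p) /\ Cn_on m U (partial k f)
  end.

Definition smooth_on (U : pt -> Prop) (f : pt -> R) : Prop := forall n, Cn_on n U f.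

Definition smooth_pos (C : R -> R) : Prop :=
  forall (n : nat) (r : R), 0 < r -> ex_derive_n C n r.

(* Vector fields and covector fields: components indexed by 1..4 *)
Definition field := nat -> pt -> R.

Definition smooth_field (U : pt -> Prop) (A : field) : Prop :=
  forall i, (1 <= i <= 4)%nat -> smooth_on U (A i).

Definition lie (xi A : field) (i : nat) (p : pt) : R :=
  sum_f 1 4 (fun k => xi k p * partial k (A i) p + A k p * partial i (xi k) p).

Definition admits (A : field) (xi : field) (U : pt -> Prop) : Prop :=
  forall i p, (1 <= i <= 4)%nat -> U p -> lie xi A i p = 0.

Definition mkfield (f1 f2 f3 f4 : pt -> R) : field :=
  fun k => match k with 1%nat => f1 | 2%nat => f2 | 3%nat => f3 | 4%nat => f4 | _ => fun _ => 0 end.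

Definition e1 : field := mkfield (fun _ => 1) (fun _ => 0) (fun _ => 0) (fun _ => 0).
Definition e3 : field := mkfield (fun _ => 0) (fun _ => 0) (fun _ => 1) (fun _ => 0).
Definition e13 : field := mkfield (fun p => x3 p) (fun _ => 0) (fun p => - x1 p) (fun _ => 0).
Definition e24 : field := mkfield (fun _ => 0) (fun p => x4 p) (fun _ => 0) (fun p => x2 p).

Definition fadd (a b : field) : field := fun k p => a k p + b k p.
Definition fscal (c : R) (a : field) : field := fun k p => c * a k p.

Definition artanh (y : R) : R := ln ((1 + y) / (1 - y)) / 2.

Definition rho (p : pt) : R := sqrt (x2 p ^ 2 - x4 p ^ 2).
Definition phi (lam : R) (p : pt) : R := artanh (x4 p / x2 p) / lam.

Definition U_reg (p : pt) : Prop := x2 p > Rabs (x4 p).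

(* Main.v *)
Require Import Defs.
From Stdlib Require Import Reals Lra Lia.
From Coquelicot Require Import Coquelicot.
Open Scope R_scope.

Lemma between_abs a b z : Rmin a b <= z <= Rmax a b -> Rabs (z - a) <= Rabs (b - a).
Proof.
  unfold Rmin, Rmax; destruct (Rle_dec a b); intros [H1 H2];
  unfold Rabs; repeat destruct Rcase_abs; lra.
Qed.

Lemma diff_partials (f : R -> R -> R) x y :
  (exists d : posreal, forall u v, Rabs (u-x) < d -> Rabs (v-y) < d -> ex_derive (fun z => f z v) u) ->
  continuity_2d_pt (fun u v => Derive (fun z => f z v) u) x y ->
  ex_derive (fun z => f x z) y ->
  differentiable_pt_lim f x y (Derive (fun z => f z y) x) (Derive (fun z => f x z) y).
Proof.
  intros [d0 Hd0] Hc Hy eps.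
  assert (He2 : 0 < eps/2) by (destruct eps; simpl; lra).
  destruct (Hc (mkposreal _ He2)) as [d1 Hd1].
  assert (Hy' := Derive_correct _ _ Hy). apply is_derive_Reals in Hy'.
  destruct (Hy' _ He2) as [d2 Hd2].
  assert (Hm: 0 < Rmin d0 (Rmin d1 d2)) by (repeat apply Rmin_pos; apply cond_pos).
  exists (mkposreal _ Hm). intros u v Hu Hv. simpl in Hu, Hv.
  assert (Hu0 : Rabs (u-x) < d0) by (eapply Rlt_le_trans; [apply Hu| apply Rmin_l]).
  assert (Hv0 : Rabs (v-y) < d0) by (eapply Rlt_le_trans; [apply Hv| apply Rmin_l]).
  assert (Hu1 : Rabs (u-x) < d1) by (eapply Rlt_le_trans; [apply Hu| eapply Rle_trans; [apply Rmin_r|apply Rmin_l]]).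
  assert (Hv1 : Rabs (v-y) < d1) by (eapply Rlt_le_trans; [apply Hv| eapply Rle_trans; [apply Rmin_r|apply Rmin_l]]).
  assert (Hv2 : Rabs (v-y) < d2) by (eapply Rlt_le_trans; [apply Hv| eapply Rle_trans; [apply Rmin_r|apply Rmin_r]]).
  destruct (MVT_gen (fun z => f z v) x u (fun z => Derive (fun z' => f z' v) z)) as [c [Hc1 Hc2]].
  - intros z Hz. simpl in Hz. apply Derive_correct. apply Hd0; [|exact Hv0].
    eapply Rle_lt_trans; [apply (between_abs x u z); lra | exact Hu0].
  - intros z Hz. simpl in Hz. apply continuity_pt_filterlim. apply (ex_derive_continuous (K:=R_AbsRing) (V:=R_NormedModule) (fun z => f z v)). apply Hd0; [|exact Hv0].
    eapply Rle_lt_trans; [apply (between_abs x u z); lra | exact Hu0].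
  - assert (Hcx : Rabs (c - x) <= Rabs (u - x)) by (apply between_abs; exact Hc1).
    specialize (Hd1 c v (Rle_lt_trans _ _ _ Hcx Hu1) Hv1). simpl in Hd1.
    assert (Hsec : Rabs (f x v - f x y - Derive (fun z => f x z) y * (v - y)) <= eps/2 * Rabs (v - y)).
    { destruct (Req_dec v y) as [E|E].
      - subst. replace (f x y - f x y - Derive (fun z => f x z) y * (y - y)) with 0 by ring.
        rewrite Rabs_R0. replace (y - y) with 0 by ring. rewrite Rabs_R0. lra.
      - assert (Hh : v - y <> 0) by lra.
        specialize (Hd2 (v - y) Hh Hv2). replace (y + (v - y)) with v in Hd2 by ring.
        replace (f x v - f x y - Derive (fun z => f x z) y * (v - y)) with
          (((f x v - f x y) / (v - y) - Derive (fun z => f x z) y) * (v - y)) by (field; exact Hh).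
        rewrite Rabs_mult. apply Rmult_le_compat_r; [apply Rabs_pos | apply Rlt_le; exact Hd2]. }
    replace (f u v - f x y - (Derive (fun z => f z y) x * (u - x) + Derive (fun z => f x z) y * (v - y)))
      with ((Derive (fun z' => f z' v) c - Derive (fun z => f z y) x) * (u - x)
            + (f x v - f x y - Derive (fun z => f x z) y * (v - y))) by lra.
    eapply Rle_trans; [apply Rabs_triang|].
    rewrite Rabs_mult.
    assert (Hm1 := Rmax_l (Rabs (u - x)) (Rabs (v - y))).
    assert (Hm2 := Rmax_r (Rabs (u - x)) (Rabs (v - y))).
    assert (Hp := Rabs_pos (u - x)).
    assert (Hq := Rabs_pos (v-y)).
    assert (Rabs (Derive (fun z' : R => f z' v) c - Derive (fun z : R => f z y) x) * Rabs (u - x) <= eps/2 * Rabs (u-x)).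
    { apply Rmult_le_compat_r; lra. }
    destruct eps as [e ep]; simpl in *. nra.
Qed.

Ltac kill_derives :=
  repeat match goal with |- context [Derive ?f 0] =>
    let H := fresh in assert (H: is_derive f 0 _) by (auto_derive; reflexivity);
    rewrite (is_derive_unique _ _ _ H); clear H end.

Ltac lie_tac A :=
  unfold lie, sum_f; simpl;
  repeat match goal with |- context [partial ?k (A ?i) ?q] =>
    let P := fresh "P" in set (P := partial k (A i) q) end;
  unfold partial, fadd, fscal, e13, e24, e1, e3, mkfield; simpl; kill_derives; ring.

Lemma lie_xi_1 lam (A : field) p : lie (fadd e13 (fscal lam e24)) A 1 p = x3 p * partial 1 (A 1%nat) p + lam * x4 p * partial 2 (A 1%nat) p - x1 p * partial 3 (A 1%nat) p + lam * x2 p * partial 4 (A 1%nat) p - A 3%nat p.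
Proof. lie_tac A. Qed.
Lemma lie_xi_2 lam (A : field) p : lie (fadd e13 (fscal lam e24)) A 2 p = x3 p * partial 1 (A 2%nat) p + lam * x4 p * partial 2 (A 2%nat) p - x1 p * partial 3 (A 2%nat) p + lam * x2 p * partial 4 (A 2%nat) p + lam * A 4%nat p.
Proof. lie_tac A. Qed.
Lemma lie_xi_3 lam (A : field) p : lie (fadd e13 (fscal lam e24)) A 3 p = x3 p * partial 1 (A 3%nat) p + lam * x4 p * partial 2 (A 3%nat) p - x1 p * partial 3 (A 3%nat) p + lam * x2 p * partial 4 (A 3%nat) p + A 1%nat p.
Proof. lie_tac A. Qed.
Lemma lie_xi_4 lam (A : field) p : lie (fadd e13 (fscal lam e24)) A 4 p = x3 p * partial 1 (A 4%nat) p + lam * x4 p * partial 2 (A 4%nat) p - x1 p * partial 3 (A 4%nat) p + lam * x2 p * partial 4 (A 4%nat) p + lam * A 2%nat p.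
Proof. lie_tac A. Qed.
Lemma lie_e1 (A : field) p i : lie e1 A i p = partial 1 (A i) p.
Proof. lie_tac A. Qed.
Lemma lie_e3 (A : field) p i : lie e3 A i p = partial 3 (A i) p.
Proof. lie_tac A. Qed.

Lemma is_derive_shift0 (g : R -> R) s l : is_derive (fun t => g (s + t)) 0 l -> is_derive g s l.
Proof.
  intros H.
  apply is_derive_ext with (f := fun z => (fun t => g (s + t)) (z - s)).
  { intros z. simpl. f_equal. apply Rplus_minus. }
  assert (H1 : is_derive (fun z => z - s) s 1) by (auto_derive; [exact I| ring]).
  replace 0 with (s - s) in H by ring.
  pose proof (is_derive_comp (fun t => g (s + t)) (fun z => z - s) s l 1 H H1) as H2.
  replace l with (scal 1 l) by (unfold scal; simpl; unfold mult; simpl; ring). exact H2.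
Qed.

Lemma is_derive_shift0' (g : R -> R) s l : is_derive g s l -> is_derive (fun t => g (s + t)) 0 l.
Proof.
  intros H.
  assert (H1 : is_derive (fun z => s + z) 0 1) by (auto_derive; [exact I| ring]).
  replace s with (s + 0) in H by ring.
  pose proof (is_derive_comp g (fun z => s + z) 0 l 1 H H1) as H2.
  replace l with (scal 1 l) by (unfold scal; simpl; unfold mult; simpl; ring). exact H2.
Qed.

Lemma Derive_shift0 (g : R -> R) s : ex_derive (fun t => g (s+t)) 0 -> Derive (fun t => g (s+t)) 0 = Derive g s.
Proof.
  intros [l H]. transitivity l; [apply is_derive_unique; exact H|].
  symmetry; apply is_derive_unique. apply is_derive_shift0; auto.
Qed.

Lemma ex_derive_shift0 (g : R -> R) s : ex_derive (fun t => g (s+t)) 0 -> ex_derive g s.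
Proof. intros [l H]. exists l. apply is_derive_shift0; auto. Qed.

Lemma const_deriv0 (g : R -> R) : (forall s, is_derive g s 0) -> forall a b, g a = g b.
Proof.
  intros H a b. destruct (Rtotal_order a b) as [h|[h|h]].
  - apply (eq_is_derive (V:=R_NormedModule)); auto.
  - subst; auto.
  - symmetry. apply (eq_is_derive (V:=R_NormedModule)); auto.
Qed.

Lemma cosh_gt_abs_sinh x : Rabs (sinh x) < cosh x.
Proof.
  unfold sinh, cosh. assert (H1 := exp_pos x). assert (H2 := exp_pos (-x)).
  unfold Rabs; destruct Rcase_abs; lra.
Qed.

Lemma smooth_cont U f : smooth_on U f -> forall p, U p -> continuous_at_pt f p.
Proof. intros H. exact (H 0%nat). Qed.

Lemma smooth_has U f k : smooth_on U f -> (1 <= k <= 4)%nat -> forall p, U p -> has_partial k f p.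
Proof. intros H Hk. destruct (H 1%nat) as [_ H1]. apply (H1 k Hk). Qed.

Lemma smooth_partial U f k : smooth_on U f -> (1 <= k <= 4)%nat -> smooth_on U (partial k f).
Proof. intros H Hk n. destruct (H (S n)) as [_ H1]. apply (H1 k Hk). Qed.

Lemma loc0 (d : R) (P : R -> Prop) : 0 < d -> (forall t, Rabs t < d -> P t) -> locally 0 P.
Proof.
  intros Hd H. exists (mkposreal d Hd). intros y Hy. apply H.
  change (Rabs (y + - 0) < d) in Hy. rewrite Ropp_0, Rplus_0_r in Hy. exact Hy.
Qed.

Lemma cont_2d a c F u v : continuous_at_pt F (Pt a u c v) -> continuity_2d_pt (fun u' v' => F (Pt a u' c v')) u v.
Proof.
  intros H eps. destruct (H eps (cond_pos eps)) as [d [Hd Hd']].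
  exists (mkposreal d Hd). intros u' v' Hu Hv. simpl in *.
  apply Hd'; simpl; auto; replace (a - a) with 0 by ring; replace (c - c) with 0 by ring; rewrite Rabs_R0; auto.
Qed.


Lemma U_pt a u c v : u > Rabs v -> U_reg (Pt a u c v).
Proof. unfold U_reg; simpl; auto. Qed.

Lemma fw_p1 A : admits A e1 U_reg -> forall i p, (1<=i<=4)%nat -> U_reg p -> partial 1 (A i) p = 0.
Proof. intros H i p Hi Hp. rewrite <- lie_e1. apply H; auto. Qed.
Lemma fw_p3 A : admits A e3 U_reg -> forall i p, (1<=i<=4)%nat -> U_reg p -> partial 3 (A i) p = 0.
Proof. intros H i p Hi Hp. rewrite <- lie_e3. apply H; auto. Qed.

Lemma fw_indep1 A : smooth_field U_reg A -> admits A e1 U_reg ->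
  forall i a a' u c v, (1<=i<=4)%nat -> u > Rabs v -> A i (Pt a u c v) = A i (Pt a' u c v).
Proof.
  intros Hs He i a a' u c v Hi Huv.
  apply (const_deriv0 (fun s => A i (Pt s u c v))).
  intros s. apply is_derive_shift0.
  assert (Hh := smooth_has _ _ 1 (Hs i Hi) ltac:(lia) (Pt s u c v) (U_pt _ _ _ _ Huv)).
  assert (Hz := fw_p1 A He i (Pt s u c v) Hi (U_pt _ _ _ _ Huv)).
  unfold has_partial in Hh; unfold partial in Hz; simpl in Hh, Hz.
  destruct Hh as [l Hl].
  assert (l = 0) by (rewrite <- Hz; symmetry; apply is_derive_unique; exact Hl).
  subst. exact Hl.
Qed.

Lemma fw_indep3 A : smooth_field U_reg A -> admits A e3 U_reg ->
  forall i a u c c' v, (1<=i<=4)%nat -> u > Rabs v -> A i (Pt a u c v) = A i (Pt a u c' v).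
Proof.
  intros Hs He i a u c c' v Hi Huv.
  apply (const_deriv0 (fun s => A i (Pt a u s v))).
  intros s. apply is_derive_shift0.
  assert (Hh := smooth_has _ _ 3 (Hs i Hi) ltac:(lia) (Pt a u s v) (U_pt _ _ _ _ Huv)).
  assert (Hz := fw_p3 A He i (Pt a u s v) Hi (U_pt _ _ _ _ Huv)).
  unfold has_partial in Hh; unfold partial in Hz; simpl in Hh, Hz.
  destruct Hh as [l Hl].
  assert (l = 0) by (rewrite <- Hz; symmetry; apply is_derive_unique; exact Hl).
  subst. exact Hl.
Qed.

Lemma near_U u v u' v' : u > Rabs v -> Rabs (u' - u) < (u - Rabs v)/2 -> Rabs (v' - v) < (u - Rabs v)/2 -> u' > Rabs v'.
Proof. intros H1 H2 H3. revert H1 H2 H3. unfold Rabs; repeat destruct Rcase_abs; lra. Qed.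

Lemma fw_diff A : smooth_field U_reg A ->
  forall i a c u v, (1<=i<=4)%nat -> u > Rabs v ->
  differentiable_pt_lim (fun u v => A i (Pt a u c v)) u v
     (partial 2 (A i) (Pt a u c v)) (partial 4 (A i) (Pt a u c v)).
Proof.
  intros Hs i a c u v Hi Huv.
  assert (Hd : 0 < (u - Rabs v)/2) by lra.
  assert (HP2 : forall u' v', u' > Rabs v' -> ex_derive (fun z => A i (Pt a z c v')) u' /\
                 partial 2 (A i) (Pt a u' c v') = Derive (fun z => A i (Pt a z c v')) u').
  { intros u' v' H'. assert (Hh := smooth_has _ _ 2 (Hs i Hi) ltac:(lia) (Pt a u' c v') (U_pt _ _ _ _ H')).
    unfold has_partial in Hh; unfold partial; simpl in Hh |- *. split.
    - exact (ex_derive_shift0 (fun z => A i (Pt a z c v')) u' Hh).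
    - exact (Derive_shift0 (fun z => A i (Pt a z c v')) u' Hh). }
  assert (HP4 : ex_derive (fun z => A i (Pt a u c z)) v /\
                 partial 4 (A i) (Pt a u c v) = Derive (fun z => A i (Pt a u c z)) v).
  { assert (Hh := smooth_has _ _ 4 (Hs i Hi) ltac:(lia) (Pt a u c v) (U_pt _ _ _ _ Huv)).
    unfold has_partial in Hh; unfold partial; simpl in Hh |- *. split.
    - exact (ex_derive_shift0 (fun z => A i (Pt a u c z)) v Hh).
    - exact (Derive_shift0 (fun z => A i (Pt a u c z)) v Hh). }
  rewrite (proj2 (HP2 u v Huv)), (proj2 HP4).
  apply diff_partials.
  - exists (mkposreal _ Hd). intros u' v' Hu' Hv'. simpl in *.
    apply HP2. apply (near_U u v); auto.
  - apply continuity_2d_pt_ext_loc with (f := fun u' v' => partial 2 (A i) (Pt a u' c v')).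
    + exists (mkposreal _ Hd). intros u' v' Hu' Hv'. simpl in *.
      apply HP2. apply (near_U u v); auto.
    + apply cont_2d. apply smooth_cont with (U := U_reg).
      * apply smooth_partial; auto; lia.
      * apply U_pt; auto.
  - apply HP4.
Qed.

Lemma deriv_rcosh r lam t : derivable_pt_lim (fun t => r * cosh (lam * t)) t (r * lam * sinh (lam * t)).
Proof. apply is_derive_Reals. unfold cosh, sinh. auto_derive; [exact I| field]. Qed.
Lemma deriv_rsinh r lam t : derivable_pt_lim (fun t => r * sinh (lam * t)) t (r * lam * cosh (lam * t)).
Proof. apply is_derive_Reals. unfold cosh, sinh. auto_derive; [exact I| field]. Qed.

Lemma curve_U a c r lam t : r > 0 -> U_reg (Pt a (r * cosh (lam * t)) c (r * sinh (lam * t))).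
Proof.
  intros Hr. apply U_pt. rewrite Rabs_mult, (Rabs_right r) by lra.
  apply Rmult_lt_compat_l; auto. apply cosh_gt_abs_sinh.
Qed.

Lemma fw_curve A lam : smooth_field U_reg A ->
  forall i a c r t, (1<=i<=4)%nat -> r > 0 ->
  is_derive (fun t => A i (Pt a (r * cosh (lam * t)) c (r * sinh (lam * t)))) t
    (lam * (r * sinh (lam * t)) * partial 2 (A i) (Pt a (r * cosh (lam * t)) c (r * sinh (lam * t)))
     + lam * (r * cosh (lam * t)) * partial 4 (A i) (Pt a (r * cosh (lam * t)) c (r * sinh (lam * t)))).
Proof.
  intros Hs i a c r t Hi Hr. apply is_derive_Reals.
  assert (Hu := curve_U a c r lam t Hr). unfold U_reg in Hu; simpl in Hu.
  pose proof (derivable_pt_lim_comp_2d (fun u v => A i (Pt a u c v)) (fun t => r * cosh (lam * t)) (fun t => r * sinh (lam * t)) t _ _ _ _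
    (fw_diff A Hs i a c _ _ Hi Hu) (deriv_rcosh r lam t) (deriv_rsinh r lam t)) as H.
  simpl in H.
  match type of H with derivable_pt_lim _ _ ?l =>
    replace (lam * (r * sinh (lam * t)) * partial 2 (A i) (Pt a (r * cosh (lam * t)) c (r * sinh (lam * t)))
     + lam * (r * cosh (lam * t)) * partial 4 (A i) (Pt a (r * cosh (lam * t)) c (r * sinh (lam * t)))) with l by ring end.
  exact H.
Qed.


Lemma Dval (f : R -> R) x l : is_derive f x l -> Derive (fun y => f y) x = l.
Proof. intros H. apply is_derive_unique. exact H. Qed.

Lemma ode_rot (f g : R -> R) : (forall t, is_derive f t (g t)) -> (forall t, is_derive g t (- f t)) ->
  forall t, f t = f 0 * cos t + g 0 * sin t /\ g t = - f 0 * sin t + g 0 * cos t.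
Proof.
  intros Hf Hg t.
  assert (Hu : forall s, is_derive (fun s => f s * cos s - g s * sin s) s 0).
  { intros s. auto_derive.
    - repeat split; [exists (g s); apply Hf | exists (- f s); apply Hg].
    - rewrite (Dval f s _ (Hf s)), (Dval g s _ (Hg s)). ring. }
  assert (Hv : forall s, is_derive (fun s => f s * sin s + g s * cos s) s 0).
  { intros s. auto_derive.
    - repeat split; [exists (g s); apply Hf | exists (- f s); apply Hg].
    - rewrite (Dval f s _ (Hf s)), (Dval g s _ (Hg s)). ring. }
  assert (E1 := const_deriv0 _ Hu t 0). assert (E2 := const_deriv0 _ Hv t 0).
  simpl in E1, E2. rewrite cos_0, sin_0 in E1, E2.
  assert (Hc := sin2_cos2 t). unfold Rsqr in Hc.
  assert (F0 : f 0 = f t * cos t - g t * sin t) by lra.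
  assert (G0 : g 0 = f t * sin t + g t * cos t) by lra.
  rewrite F0, G0. split.
  - replace (f t) with (f t * (sin t * sin t + cos t * cos t)) at 1 by (rewrite Hc; ring). ring.
  - replace (g t) with (g t * (sin t * sin t + cos t * cos t)) at 1 by (rewrite Hc; ring). ring.
Qed.

Lemma ode_hyp (f g : R -> R) lam : (forall t, is_derive f t (- lam * g t)) -> (forall t, is_derive g t (- lam * f t)) ->
  forall t, f t = f 0 * cosh (lam * t) - g 0 * sinh (lam * t) /\ g t = - f 0 * sinh (lam * t) + g 0 * cosh (lam * t).
Proof.
  intros Hf Hg t.
  assert (Hu : forall s, is_derive (fun s => f s * cosh (lam * s) + g s * sinh (lam * s)) s 0).
  { intros s. unfold cosh, sinh. auto_derive.
    - repeat split; [exists (- lam * g s); apply Hf | exists (- lam * f s); apply Hg].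
    - rewrite (Dval f s _ (Hf s)), (Dval g s _ (Hg s)). field. }
  assert (Hv : forall s, is_derive (fun s => f s * sinh (lam * s) + g s * cosh (lam * s)) s 0).
  { intros s. unfold cosh, sinh. auto_derive.
    - repeat split; [exists (- lam * g s); apply Hf | exists (- lam * f s); apply Hg].
    - rewrite (Dval f s _ (Hf s)), (Dval g s _ (Hg s)). field. }
  assert (E1 := const_deriv0 _ Hu t 0). assert (E2 := const_deriv0 _ Hv t 0).
  simpl in E1, E2. rewrite Rmult_0_r, cosh_0, sinh_0 in E1, E2.
  assert (Hc : cosh (lam * t) * cosh (lam * t) - sinh (lam * t) * sinh (lam * t) = 1).
  { unfold cosh, sinh.
    assert (H : exp (lam*t) * exp (-(lam*t)) = 1) by (rewrite <- exp_plus, Rplus_opp_r, exp_0; reflexivity).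
    transitivity (exp (lam*t) * exp (-(lam*t))); [field | exact H]. }
  assert (F0 : f 0 = f t * cosh (lam * t) + g t * sinh (lam * t)) by lra.
  assert (G0 : g 0 = f t * sinh (lam * t) + g t * cosh (lam * t)) by lra.
  rewrite F0, G0. split.
  - replace (f t) with (f t * (cosh (lam * t) * cosh (lam * t) - sinh (lam * t) * sinh (lam * t))) at 1 by (rewrite Hc; ring). ring.
  - replace (g t) with (g t * (cosh (lam * t) * cosh (lam * t) - sinh (lam * t) * sinh (lam * t))) at 1 by (rewrite Hc; ring). ring.
Qed.


Lemma pos_sq_inj a b : 0 < a -> 0 < b -> a * a = b * b -> a = b.
Proof.
  intros Ha Hb H. assert (H2 : (a - b) * (a + b) = 0) by lra.
  apply Rmult_integral in H2. destruct H2; lra.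
Qed.

Lemma hyp_id lam p : lam <> 0 -> U_reg p ->
  rho p > 0 /\ rho p * cosh (lam * phi lam p) = x2 p /\ rho p * sinh (lam * phi lam p) = x4 p.
Proof.
  destruct p as [a u c v]; unfold U_reg, rho, phi, artanh; cbn [x1 x2 x3 x4]; intros Hl Hu.
  assert (Hu0 : u > 0) by (revert Hu; unfold Rabs; destruct Rcase_abs; lra).
  assert (Hm : u - v > 0) by (revert Hu; unfold Rabs; destruct Rcase_abs; lra).
  assert (Hp : u + v > 0) by (revert Hu; unfold Rabs; destruct Rcase_abs; lra).
  replace (lam * (ln ((1 + v / u) / (1 - v / u)) / 2 / lam)) with (ln ((1 + v / u) / (1 - v / u)) / 2) by (field; auto).
  replace ((1 + v / u) / (1 - v / u)) with ((u + v) / (u - v)) by (field; lra).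
  set (q := (u + v) / (u - v)).
  assert (Hq : 0 < q) by (unfold q; apply Rdiv_lt_0_compat; lra).
  set (z := ln q / 2).
  assert (Hs : exp z * exp z = q) by (rewrite <- exp_plus; unfold z; replace (ln q / 2 + ln q / 2) with (ln q) by field; apply exp_ln; auto).
  assert (Hs0 := exp_pos z).
  assert (Hr2 : 0 < u ^ 2 - v ^ 2) by nra.
  assert (Hr := sqrt_lt_R0 _ Hr2).
  assert (Hrr := sqrt_sqrt _ (Rlt_le _ _ Hr2)).
  set (r := sqrt (u ^ 2 - v ^ 2)) in *.
  assert (E1 : r * exp z = u + v).
  { apply pos_sq_inj; try nra.
    replace (r * exp z * (r * exp z)) with ((r * r) * (exp z * exp z)) by ring.
    rewrite Hrr, Hs. unfold q. field. lra. }
  assert (E2 : r * exp (- z) = u - v).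
  { rewrite exp_Ropp. apply Rmult_eq_reg_l with (u + v); [|lra].
    rewrite <- E1 at 1.
    replace (r * exp z * (r * / exp z)) with (r * r) by (field; lra). rewrite Hrr. ring. }
  unfold cosh, sinh. split; [lra|split].
  - replace (r * ((exp z + exp (- z)) / 2)) with ((r * exp z + r * exp (-z)) / 2) by field.
    rewrite E1, E2. field.
  - replace (r * ((exp z - exp (- z)) / 2)) with ((r * exp z - r * exp (-z)) / 2) by field.
    rewrite E1, E2. field.
Qed.


Fixpoint iterp (n : nat) (f : pt -> R) : pt -> R :=
  match n with O => f | S m => partial 2 (iterp m f) end.

Lemma smooth_iterp f n : smooth_on U_reg f -> smooth_on U_reg (iterp n f).
Proof. intros H; induction n; simpl; auto. apply smooth_partial; auto; lia. Qed.

Lemma locr (r : R) (P : R -> Prop) : 0 < r -> (forall t, 0 < t -> P t) -> locally r P.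
Proof.
  intros Hr H. exists (mkposreal r Hr). intros y Hy. apply H.
  change (Rabs (y + - r) < r) in Hy. revert Hy; unfold Rabs; destruct Rcase_abs; intros; lra.
Qed.

Lemma smooth_slice f : smooth_on U_reg f -> smooth_pos (fun r => f (Pt 0 r 0 0)).
Proof.
  intros Hs.
  assert (K : forall n r, 0 < r -> ex_derive_n (fun r => f (Pt 0 r 0 0)) n r /\
             Derive_n (fun r => f (Pt 0 r 0 0)) n r = iterp n f (Pt 0 r 0 0)).
  { induction n; intros r Hr.
    - split; [exact I | reflexivity].
    - assert (Hh := smooth_has _ _ 2 (smooth_iterp f n Hs) ltac:(lia) (Pt 0 r 0 0) (U_pt 0 r 0 0 ltac:(rewrite Rabs_R0; lra))).
      unfold has_partial in Hh; simpl in Hh.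
      assert (Hloc : locally r (fun t => iterp n f (Pt 0 t 0 0) = Derive_n (fun r => f (Pt 0 r 0 0)) n t)).
      { apply locr; auto. intros t Ht. symmetry. apply IHn; auto. }
      split.
      + simpl. apply ex_derive_ext_loc with (f := fun t => iterp n f (Pt 0 t 0 0)); auto.
        exact (ex_derive_shift0 (fun t => iterp n f (Pt 0 t 0 0)) r Hh).
      + simpl. rewrite <- (Derive_ext_loc _ _ r Hloc).
        unfold partial; simpl. symmetry. exact (Derive_shift0 (fun t => iterp n f (Pt 0 t 0 0)) r Hh). }
  intros n r Hr. apply K; auto.
Qed.

Lemma fw_F lam A : smooth_field U_reg A -> admits A (fadd e13 (fscal lam e24)) U_reg ->
  admits A e1 U_reg -> admits A e3 U_reg -> forall a c r, r > 0 ->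
  let F := fun i t => A i (Pt a (r * cosh (lam * t)) c (r * sinh (lam * t))) in
  (forall t, is_derive (F 1%nat) t (F 3%nat t)) /\ (forall t, is_derive (F 3%nat) t (- F 1%nat t)) /\
  (forall t, is_derive (F 2%nat) t (- lam * F 4%nat t)) /\ (forall t, is_derive (F 4%nat) t (- lam * F 2%nat t)).
Proof.
  intros Hs Hx H1 H3 a c r Hr F.
  assert (G : forall i t, (1 <= i <= 4)%nat ->
     is_derive (F i) t (lam * (r * sinh (lam * t)) * partial 2 (A i) (Pt a (r * cosh (lam * t)) c (r * sinh (lam * t)))
     + lam * (r * cosh (lam * t)) * partial 4 (A i) (Pt a (r * cosh (lam * t)) c (r * sinh (lam * t))))).
  { intros i t Hi. apply fw_curve; auto. }
  assert (Z : forall i t, (1 <= i <= 4)%nat -> lie (fadd e13 (fscal lam e24)) A i (Pt a (r * cosh (lam * t)) c (r * sinh (lam * t))) = 0).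
  { intros i t Hi. apply Hx; auto. apply curve_U; auto. }
  assert (P1 : forall i t, (1 <= i <= 4)%nat -> partial 1 (A i) (Pt a (r * cosh (lam * t)) c (r * sinh (lam * t))) = 0).
  { intros i t Hi. apply fw_p1; auto. apply curve_U; auto. }
  assert (P3 : forall i t, (1 <= i <= 4)%nat -> partial 3 (A i) (Pt a (r * cosh (lam * t)) c (r * sinh (lam * t))) = 0).
  { intros i t Hi. apply fw_p3; auto. apply curve_U; auto. }
  split; [|split; [|split]]; intros t.
  - assert (L := Z 1%nat t ltac:(lia)). rewrite lie_xi_1, P1, P3 in L by lia. cbn [x1 x2 x3 x4] in L.
    assert (Gt := G 1%nat t ltac:(lia)).
    match type of Gt with is_derive _ _ ?l => replace (F 3%nat t) with l by (unfold F; lra) end. exact Gt.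
  - assert (L := Z 3%nat t ltac:(lia)). rewrite lie_xi_3, P1, P3 in L by lia. cbn [x1 x2 x3 x4] in L.
    assert (Gt := G 3%nat t ltac:(lia)).
    match type of Gt with is_derive _ _ ?l => replace (- F 1%nat t) with l by (unfold F; lra) end. exact Gt.
  - assert (L := Z 2%nat t ltac:(lia)). rewrite lie_xi_2, P1, P3 in L by lia. cbn [x1 x2 x3 x4] in L.
    assert (Gt := G 2%nat t ltac:(lia)).
    match type of Gt with is_derive _ _ ?l => replace (- lam * F 4%nat t) with l by (unfold F; lra) end. exact Gt.
  - assert (L := Z 4%nat t ltac:(lia)). rewrite lie_xi_4, P1, P3 in L by lia. cbn [x1 x2 x3 x4] in L.
    assert (Gt := G 4%nat t ltac:(lia)).
    match type of Gt with is_derive _ _ ?l => replace (- lam * F 2%nat t) with l by (unfold F; lra) end. exact Gt.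
Qed.

Lemma forward lam A : lam <> 0 -> smooth_field U_reg A ->
  admits A (fadd e13 (fscal lam e24)) U_reg -> admits A e1 U_reg -> admits A e3 U_reg ->
   exists C1 C2 C3 C4 : R -> R,
     smooth_pos C1 /\ smooth_pos C2 /\ smooth_pos C3 /\ smooth_pos C4 /\
     forall p, U_reg p ->
       A 1%nat p = C1 (rho p) * cos (phi lam p) + C2 (rho p) * sin (phi lam p) /\
       A 2%nat p = C3 (rho p) * cosh (lam * phi lam p) + C4 (rho p) * sinh (lam * phi lam p) /\
       A 3%nat p = - C1 (rho p) * sin (phi lam p) + C2 (rho p) * cos (phi lam p) /\
       A 4%nat p = - C3 (rho p) * sinh (lam * phi lam p) - C4 (rho p) * cosh (lam * phi lam p).
Proof.
  intros Hl Hs Hx H1 H3.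
  exists (fun r => A 1%nat (Pt 0 r 0 0)), (fun r => A 3%nat (Pt 0 r 0 0)),
         (fun r => A 2%nat (Pt 0 r 0 0)), (fun r => - A 4%nat (Pt 0 r 0 0)).
  split; [apply smooth_slice, Hs; lia|].
  split; [apply smooth_slice, Hs; lia|].
  split; [apply smooth_slice, Hs; lia|].
  split; [intros n r Hr; apply ex_derive_n_opp; apply smooth_slice; [apply Hs; lia| exact Hr]|].
  intros p Hp.
  destruct (hyp_id lam p Hl Hp) as [Hr [Ec Es]].
  set (r := rho p) in *. set (ph := phi lam p) in *.
  destruct (fw_F lam A Hs Hx H1 H3 (x1 p) (x3 p) r Hr) as [D1 [D3 [D2 D4]]].
  destruct (ode_rot _ _ D1 D3 ph) as [R1 R3].
  destruct (ode_hyp _ _ lam D2 D4 ph) as [R2 R4].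
  cbv beta in R1, R2, R3, R4.
  rewrite Ec, Es in R1, R2, R3, R4.
  rewrite !Rmult_0_r, cosh_0, sinh_0, Rmult_1_r, Rmult_0_r in R1, R2, R3, R4.
  assert (I0 : forall i, (1 <= i <= 4)%nat -> A i (Pt (x1 p) r (x3 p) 0) = A i (Pt 0 r 0 0)).
  { intros i Hi. assert (Hr0 : r > Rabs 0) by (rewrite Rabs_R0; lra).
    rewrite (fw_indep1 A Hs H1 i (x1 p) 0 r (x3 p) 0 Hi Hr0).
    apply (fw_indep3 A Hs H3 i 0 r (x3 p) 0 0 Hi Hr0). }
  rewrite !I0 in R1, R2, R3, R4 by lia.
  destruct p as [a u c v]. cbn [x1 x2 x3 x4] in *.
  repeat split; [rewrite R1 | rewrite R2 | rewrite R3 | rewrite R4]; ring.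
Qed.


Definition Hform lam (A : field) (C1 C2 C3 C4 : R -> R) :=
  forall p, U_reg p ->
       A 1%nat p = C1 (rho p) * cos (phi lam p) + C2 (rho p) * sin (phi lam p) /\
       A 2%nat p = C3 (rho p) * cosh (lam * phi lam p) + C4 (rho p) * sinh (lam * phi lam p) /\
       A 3%nat p = - C1 (rho p) * sin (phi lam p) + C2 (rho p) * cos (phi lam p) /\
       A 4%nat p = - C3 (rho p) * sinh (lam * phi lam p) - C4 (rho p) * cosh (lam * phi lam p).

Lemma bw_p13 lam A C1 C2 C3 C4 : Hform lam A C1 C2 C3 C4 -> forall k i p, (k = 1 \/ k = 3)%nat -> (1 <= i <= 4)%nat -> U_reg p ->
  partial k (A i) p = 0.
Proof.
  intros HF k i p Hk Hi Hp. unfold partial.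
  rewrite (Derive_ext (fun t => A i (shift k t p)) (fun _ => A i p)).
  - apply Derive_const.
  - intros t. destruct Hk; subst k.
    + assert (Hq : U_reg (shift 1 t p)) by exact Hp.
      destruct (HF _ Hq) as [E1 [E2 [E3 E4]]]. destruct (HF _ Hp) as [F1 [F2 [F3 F4]]].
      destruct i as [|[|[|[|[|i]]]]]; try lia; [rewrite E1, F1 | rewrite E2, F2 | rewrite E3, F3 | rewrite E4, F4]; reflexivity.
    + assert (Hq : U_reg (shift 3 t p)) by exact Hp.
      destruct (HF _ Hq) as [E1 [E2 [E3 E4]]]. destruct (HF _ Hp) as [F1 [F2 [F3 F4]]].
      destruct i as [|[|[|[|[|i]]]]]; try lia; [rewrite E1, F1 | rewrite E2, F2 | rewrite E3, F3 | rewrite E4, F4]; reflexivity.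
Qed.

Definition rr u v := sqrt (u ^ 2 - v ^ 2).
Definition ff lam u v := ln ((1 + v / u) / (1 - v / u)) / 2 / lam.

Lemma bw_loc lam A C1 C2 C3 C4 : lam <> 0 -> Hform lam A C1 C2 C3 C4 -> forall a u c v, u > Rabs v ->
 A 1%nat (Pt a u c v) = C1 (rr u v) * cos (ff lam u v) + C2 (rr u v) * sin (ff lam u v) /\
 A 2%nat (Pt a u c v) = C3 (rr u v) * (u / rr u v) + C4 (rr u v) * (v / rr u v) /\
 A 3%nat (Pt a u c v) = - C1 (rr u v) * sin (ff lam u v) + C2 (rr u v) * cos (ff lam u v) /\
 A 4%nat (Pt a u c v) = - C3 (rr u v) * (v / rr u v) - C4 (rr u v) * (u / rr u v).
Proof.
  intros Hl HF a u c v Huv. assert (Hp := U_pt a u c v Huv).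
  destruct (hyp_id lam _ Hl Hp) as [Hr [Ec Es]]. destruct (HF _ Hp) as [F1 [F2 [F3 F4]]].
  cbn [x2 x4] in Ec, Es.
  change (rho (Pt a u c v)) with (rr u v) in *. change (phi lam (Pt a u c v)) with (ff lam u v) in *.
  assert (Ch : cosh (lam * ff lam u v) = u / rr u v) by (apply (Rmult_eq_reg_l (rr u v)); [rewrite Ec; field; lra | lra]).
  assert (Sh : sinh (lam * ff lam u v) = v / rr u v) by (apply (Rmult_eq_reg_l (rr u v)); [rewrite Es; field; lra | lra]).
  rewrite Ch, Sh in F2, F4. auto.
Qed.

Lemma bw_facts u v : u > Rabs v -> u > 0 /\ 0 < u * u + - (v * v) /\ 0 < 1 + v * / u /\ 0 < 1 + - (v * / u)
   /\ 0 < sqrt (u * u + - (v * v)) /\ - u < v < u.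
Proof.
  intros H. assert (Hu0 : u > 0) by (revert H; unfold Rabs; destruct Rcase_abs; lra).
  assert (H1 : - u < v < u) by (revert H; unfold Rabs; destruct Rcase_abs; lra).
  assert (Hw : 0 < u * u + - (v * v)) by nra.
  assert (Hy : -1 < v * / u < 1).
  { split; [apply Rmult_lt_reg_r with u; [lra|]; rewrite Rmult_assoc, Rinv_l by lra; lra
            |apply Rmult_lt_reg_r with u; [lra|]; rewrite Rmult_assoc, Rinv_l by lra; lra]. }
  repeat split; try lra. apply sqrt_lt_R0; auto.
Qed.

Lemma bw_partial (A : field) i (L : R -> R -> R) :
  (forall a u c v, u > Rabs v -> A i (Pt a u c v) = L u v) -> forall a u c v, u > Rabs v ->
  partial 2 (A i) (Pt a u c v) = Derive (fun t => L (u+t) v) 0 /\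
  partial 4 (A i) (Pt a u c v) = Derive (fun t => L u (v+t)) 0.
Proof.
  intros HL a u c v Huv. assert (Hd : 0 < (u - Rabs v)/2) by (revert Huv; unfold Rabs; destruct Rcase_abs; lra).
  split; unfold partial; apply Derive_ext_loc; apply (loc0 _ _ Hd); intros t Ht; cbn [shift x1 x2 x3 x4];
  apply HL; apply (near_U u v); auto.
  - replace (u + t - u) with t by ring; auto.
  - replace (v - v) with 0 by ring; rewrite Rabs_R0; auto.
  - replace (u - u) with 0 by ring; rewrite Rabs_R0; auto.
  - replace (v + t - v) with t by ring; auto.
Qed.

Ltac side_tac HC1 HC2 Hu0 Hw Hy1 Hy2 Hsq :=
  rewrite ?Rplus_0_r, ?Rmult_1_r;
  first [ exact I
        | apply (HC1 1%nat); exact Hsq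
        | apply (HC2 1%nat); exact Hsq
        | exact Hw
        | lra
        | apply Rmult_lt_0_compat; [lra | apply Rinv_0_lt_compat; lra] ].

Lemma bw_xi_1 lam A C1 C2 C3 C4 : lam <> 0 -> Hform lam A C1 C2 C3 C4 ->
  smooth_pos C1 -> smooth_pos C2 -> smooth_pos C3 -> smooth_pos C4 ->
  forall p, U_reg p -> lie (fadd e13 (fscal lam e24)) A 1 p = 0.
Proof.
  intros Hl HF H1 H2 H3 H4 p Hp.
  rewrite lie_xi_1, (bw_p13 _ _ _ _ _ _ HF 1 1 p), (bw_p13 _ _ _ _ _ _ HF 3 1 p) by (auto; lia).
  destruct p as [a u c v]. unfold U_reg in Hp; cbn [x1 x2 x3 x4] in *.
  destruct (bw_partial A 1 (fun u v => C1 (rr u v) * cos (ff lam u v) + C2 (rr u v) * sin (ff lam u v)))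
    with (a := a) (u := u) (c := c) (v := v) as [E2 E4]; auto.
  { intros a' u' c' v' H'. apply (bw_loc lam A C1 C2 C3 C4 Hl HF a' u' c' v' H'). }
  rewrite (proj1 (proj2 (proj2 (bw_loc lam A C1 C2 C3 C4 Hl HF a u c v Hp)))).
  destruct (bw_facts u v Hp) as [Hu0 [Hw [Hy1 [Hy2 [Hsq Hvu]]]]].
  eassert (D2 : is_derive (fun t => (fun u v => C1 (rr u v) * cos (ff lam u v) + C2 (rr u v) * sin (ff lam u v)) (u+t) v) 0 _).
  { unfold rr, ff. auto_derive; [repeat split; side_tac H1 H2 Hu0 Hw Hy1 Hy2 Hsq | reflexivity]. }
  eassert (D4 : is_derive (fun t => (fun u v => C1 (rr u v) * cos (ff lam u v) + C2 (rr u v) * sin (ff lam u v)) u (v+t)) 0 _).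
  { unfold rr, ff. auto_derive; [repeat split; side_tac H1 H2 Hu0 Hw Hy1 Hy2 Hsq | reflexivity]. }
  rewrite (eq_trans E2 (is_derive_unique _ _ _ D2)), (eq_trans E4 (is_derive_unique _ _ _ D4)).
  unfold rr, ff. rewrite ?Rplus_0_r, ?Rmult_1_r. unfold Rdiv, Rminus. cbn [pow]. rewrite ?Rmult_1_r.
  set (S := sqrt (u * u + - (v * v))) in *.
  set (cs := cos (ln ((1 + v * / u) * / (1 + - (v * / u))) * / 2 * / lam)).
  set (sn := sin (ln ((1 + v * / u) * / (1 + - (v * / u))) * / 2 * / lam)).
  set (d1 := Derive (fun x : R => C1 x) S). set (d2 := Derive (fun x : R => C2 x) S).
  field. repeat split; first [exact Hl | lra].
Qed.

Lemma bw_xi_2 lam A C1 C2 C3 C4 : lam <> 0 -> Hform lam A C1 C2 C3 C4 ->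
  smooth_pos C1 -> smooth_pos C2 -> smooth_pos C3 -> smooth_pos C4 ->
  forall p, U_reg p -> lie (fadd e13 (fscal lam e24)) A 2 p = 0.
Proof.
  intros Hl HF H1 H2 H3 H4 p Hp.
  rewrite lie_xi_2, (bw_p13 _ _ _ _ _ _ HF 1 2 p), (bw_p13 _ _ _ _ _ _ HF 3 2 p) by (auto; lia).
  destruct p as [a u c v]. unfold U_reg in Hp; cbn [x1 x2 x3 x4] in *.
  destruct (bw_partial A 2 (fun u v => C3 (rr u v) * (u / rr u v) + C4 (rr u v) * (v / rr u v)))
    with (a := a) (u := u) (c := c) (v := v) as [E2 E4]; auto.
  { intros a' u' c' v' H'. apply (bw_loc lam A C1 C2 C3 C4 Hl HF a' u' c' v' H'). }
  rewrite (proj2 (proj2 (proj2(bw_loc lam A C1 C2 C3 C4 Hl HF a u c v Hp)))).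
  destruct (bw_facts u v Hp) as [Hu0 [Hw [Hy1 [Hy2 [Hsq Hvu]]]]].
  eassert (D2 : is_derive (fun t => (fun u v => C3 (rr u v) * (u / rr u v) + C4 (rr u v) * (v / rr u v)) (u+t) v) 0 _).
  { unfold rr, ff. auto_derive; [repeat split; side_tac H3 H4 Hu0 Hw Hy1 Hy2 Hsq | reflexivity]. }
  eassert (D4 : is_derive (fun t => (fun u v => C3 (rr u v) * (u / rr u v) + C4 (rr u v) * (v / rr u v)) u (v+t)) 0 _).
  { unfold rr, ff. auto_derive; [repeat split; side_tac H3 H4 Hu0 Hw Hy1 Hy2 Hsq | reflexivity]. }
  rewrite (eq_trans E2 (is_derive_unique _ _ _ D2)), (eq_trans E4 (is_derive_unique _ _ _ D4)).
  unfold rr, ff. rewrite ?Rplus_0_r, ?Rmult_1_r. unfold Rdiv, Rminus. cbn [pow]. rewrite ?Rmult_1_r.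
  set (S := sqrt (u * u + - (v * v))) in *.
  set (cs := cos (ln ((1 + v * / u) * / (1 + - (v * / u))) * / 2 * / lam)).
  set (sn := sin (ln ((1 + v * / u) * / (1 + - (v * / u))) * / 2 * / lam)).
  set (d1 := Derive (fun x : R => C3 x) S). set (d2 := Derive (fun x : R => C4 x) S).
  field. repeat split; first [exact Hl | lra].
Qed.

Lemma bw_xi_3 lam A C1 C2 C3 C4 : lam <> 0 -> Hform lam A C1 C2 C3 C4 ->
  smooth_pos C1 -> smooth_pos C2 -> smooth_pos C3 -> smooth_pos C4 ->
  forall p, U_reg p -> lie (fadd e13 (fscal lam e24)) A 3 p = 0.
Proof.
  intros Hl HF H1 H2 H3 H4 p Hp.
  rewrite lie_xi_3, (bw_p13 _ _ _ _ _ _ HF 1 3 p), (bw_p13 _ _ _ _ _ _ HF 3 3 p) by (auto; lia).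
  destruct p as [a u c v]. unfold U_reg in Hp; cbn [x1 x2 x3 x4] in *.
  destruct (bw_partial A 3 (fun u v => - C1 (rr u v) * sin (ff lam u v) + C2 (rr u v) * cos (ff lam u v)))
    with (a := a) (u := u) (c := c) (v := v) as [E2 E4]; auto.
  { intros a' u' c' v' H'. apply (bw_loc lam A C1 C2 C3 C4 Hl HF a' u' c' v' H'). }
  rewrite (proj1 (bw_loc lam A C1 C2 C3 C4 Hl HF a u c v Hp)).
  destruct (bw_facts u v Hp) as [Hu0 [Hw [Hy1 [Hy2 [Hsq Hvu]]]]].
  eassert (D2 : is_derive (fun t => (fun u v => - C1 (rr u v) * sin (ff lam u v) + C2 (rr u v) * cos (ff lam u v)) (u+t) v) 0 _).
  { unfold rr, ff. auto_derive; [repeat split; side_tac H1 H2 Hu0 Hw Hy1 Hy2 Hsq | reflexivity]. }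
  eassert (D4 : is_derive (fun t => (fun u v => - C1 (rr u v) * sin (ff lam u v) + C2 (rr u v) * cos (ff lam u v)) u (v+t)) 0 _).
  { unfold rr, ff. auto_derive; [repeat split; side_tac H1 H2 Hu0 Hw Hy1 Hy2 Hsq | reflexivity]. }
  rewrite (eq_trans E2 (is_derive_unique _ _ _ D2)), (eq_trans E4 (is_derive_unique _ _ _ D4)).
  unfold rr, ff. rewrite ?Rplus_0_r, ?Rmult_1_r. unfold Rdiv, Rminus. cbn [pow]. rewrite ?Rmult_1_r.
  set (S := sqrt (u * u + - (v * v))) in *.
  set (cs := cos (ln ((1 + v * / u) * / (1 + - (v * / u))) * / 2 * / lam)).
  set (sn := sin (ln ((1 + v * / u) * / (1 + - (v * / u))) * / 2 * / lam)).
  set (d1 := Derive (fun x : R => C1 x) S). set (d2 := Derive (fun x : R => C2 x) S).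
  field. repeat split; first [exact Hl | lra].
Qed.

Lemma bw_xi_4 lam A C1 C2 C3 C4 : lam <> 0 -> Hform lam A C1 C2 C3 C4 ->
  smooth_pos C1 -> smooth_pos C2 -> smooth_pos C3 -> smooth_pos C4 ->
  forall p, U_reg p -> lie (fadd e13 (fscal lam e24)) A 4 p = 0.
Proof.
  intros Hl HF H1 H2 H3 H4 p Hp.
  rewrite lie_xi_4, (bw_p13 _ _ _ _ _ _ HF 1 4 p), (bw_p13 _ _ _ _ _ _ HF 3 4 p) by (auto; lia).
  destruct p as [a u c v]. unfold U_reg in Hp; cbn [x1 x2 x3 x4] in *.
  destruct (bw_partial A 4 (fun u v => - C3 (rr u v) * (v / rr u v) - C4 (rr u v) * (u / rr u v)))
    with (a := a) (u := u) (c := c) (v := v) as [E2 E4]; auto.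
  { intros a' u' c' v' H'. apply (bw_loc lam A C1 C2 C3 C4 Hl HF a' u' c' v' H'). }
  rewrite (proj1 (proj2 ((bw_loc lam A C1 C2 C3 C4 Hl HF a u c v Hp)))).
  destruct (bw_facts u v Hp) as [Hu0 [Hw [Hy1 [Hy2 [Hsq Hvu]]]]].
  eassert (D2 : is_derive (fun t => (fun u v => - C3 (rr u v) * (v / rr u v) - C4 (rr u v) * (u / rr u v)) (u+t) v) 0 _).
  { unfold rr, ff. auto_derive; [repeat split; side_tac H3 H4 Hu0 Hw Hy1 Hy2 Hsq | reflexivity]. }
  eassert (D4 : is_derive (fun t => (fun u v => - C3 (rr u v) * (v / rr u v) - C4 (rr u v) * (u / rr u v)) u (v+t)) 0 _).
  { unfold rr, ff. auto_derive; [repeat split; side_tac H3 H4 Hu0 Hw Hy1 Hy2 Hsq | reflexivity]. }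
  rewrite (eq_trans E2 (is_derive_unique _ _ _ D2)), (eq_trans E4 (is_derive_unique _ _ _ D4)).
  unfold rr, ff. rewrite ?Rplus_0_r, ?Rmult_1_r. unfold Rdiv, Rminus. cbn [pow]. rewrite ?Rmult_1_r.
  set (S := sqrt (u * u + - (v * v))) in *.
  set (cs := cos (ln ((1 + v * / u) * / (1 + - (v * / u))) * / 2 * / lam)).
  set (sn := sin (ln ((1 + v * / u) * / (1 + - (v * / u))) * / 2 * / lam)).
  set (d1 := Derive (fun x : R => C3 x) S). set (d2 := Derive (fun x : R => C4 x) S).
  field. repeat split; first [exact Hl | lra].
Qed.

Lemma backward lam A : lam <> 0 ->
   (exists C1 C2 C3 C4 : R -> R,
     smooth_pos C1 /\ smooth_pos C2 /\ smooth_pos C3 /\ smooth_pos C4 /\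
     forall p, U_reg p ->
       A 1%nat p = C1 (rho p) * cos (phi lam p) + C2 (rho p) * sin (phi lam p) /\
       A 2%nat p = C3 (rho p) * cosh (lam * phi lam p) + C4 (rho p) * sinh (lam * phi lam p) /\
       A 3%nat p = - C1 (rho p) * sin (phi lam p) + C2 (rho p) * cos (phi lam p) /\
       A 4%nat p = - C3 (rho p) * sinh (lam * phi lam p) - C4 (rho p) * cosh (lam * phi lam p)) ->
  admits A (fadd e13 (fscal lam e24)) U_reg /\ admits A e1 U_reg /\ admits A e3 U_reg.
Proof.
  intros Hl [C1 [C2 [C3 [C4 [H1 [H2 [H3 [H4 HF]]]]]]]].
  change (Hform lam A C1 C2 C3 C4) in HF.
  split; [|split]; intros i p Hi Hp.
  - destruct i as [|[|[|[|[|i]]]]]; try lia.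
    + eapply bw_xi_1; eauto.
    + eapply bw_xi_2; eauto.
    + eapply bw_xi_3; eauto.
    + eapply bw_xi_4; eauto.
  - rewrite lie_e1. apply (bw_p13 _ _ _ _ _ _ HF 1 i p); auto.
  - rewrite lie_e3. apply (bw_p13 _ _ _ _ _ _ HF 3 i p); auto.
Qed.

Theorem mainTheorem7 (lam : R) (A : field) :
  lam <> 0 ->
  smooth_field U_reg A ->
  ((admits A (fadd e13 (fscal lam e24)) U_reg /\ admits A e1 U_reg /\ admits A e3 U_reg)
   <->
   exists C1 C2 C3 C4 : R -> R,
     smooth_pos C1 /\ smooth_pos C2 /\ smooth_pos C3 /\ smooth_pos C4 /\
     forall p, U_reg p ->
       A 1%nat p = C1 (rho p) * cos (phi lam p) + C2 (rho p) * sin (phi lam p) /\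
       A 2%nat p = C3 (rho p) * cosh (lam * phi lam p) + C4 (rho p) * sinh (lam * phi lam p) /\
       A 3%nat p = - C1 (rho p) * sin (phi lam p) + C2 (rho p) * cos (phi lam p) /\
       A 4%nat p = - C3 (rho p) * sinh (lam * phi lam p) - C4 (rho p) * cosh (lam * phi lam p)).
Proof.
  intros Hl Hs. split.
  - intros [Hx [H1 H3]]. apply forward; auto.
  - apply backward; auto.
Qed.
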